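(* Let $G$ and $H$ be connected nontrivial graphs of orders $n_1$ and $n_2$, respectively. If the vertex set of $G_{SR}$ can be partitioned into $\beta(G_{SR})$ cliques, then $$dim_s(G\boxtimes H) = n_2\cdot dim_s(G) + n_1\cdot dim_s(H) - dim_s(G)\cdot dim_s(H).$$
   Context: For a connected graph $G$ with shortest-path distance $d_G$, a vertex $w$ strongly resolves $u,v$ if $d_G(w,u)=d_G(w,v)+d_G(v,u)$ or $d_G(w,v)=d_G(w,u)+d_G(u,v)$; $dim_s(G)$ is the minimum cardinality of a set $S\subseteq V(G)$ such that every pair of vertices is strongly resolved by some vertex of $S$. A vertex $u$ is maximally distant from $v$ if every neighbor $w$ of $u$ satisfies $d_G(v,w)\le d_G(u,v)$; $u,v$ are mutually maximally distant if each is maximally distant from the other. The strong resolving graph $G_{SR}$ has vertex set $V(G)$, with $u,v$ adjacent iff mutually maximally distant in $G$. $\beta$ denotes the independence number; a clique is a set of pairwise adjacent vertices. The strong product $G\boxtimes H$ has vertex set $V(G)\times V(H)$, with $(a,b)\sim(c,d)$ iff ($a=c$ and $bd\in E(H)$) or ($ac\in E(G)$ and $b=d$) or ($ac\in E(G)$ and $bd\in E(H)$). Nontrivial means at least two vertices. *)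

(* Defs.v *)
From mathcomp Require Import all_boot.
Set Implicit Arguments. Unset Strict Implicit. Unset Printing Implicit Defensive.

Section Graphs.
Variable T : finType.
Variable e : rel T.

Definition simple_graph := symmetric e /\ irreflexive e.
Definition connected_graph := forall x y : T, connect e x y.

Fixpoint reach (k : nat) (x : T) : {set T} :=
  match k with
  | 0 => [set x]
  | k'.+1 => reach k' x :|: [set z | [exists y in reach k' x, e y z]]
  end.

(* shortest-path distance: least k with y reachable in <= k steps
   (any shortest path has length < #|T|; value #|T| only if unreachable) *)
Definition dist (x y : T) : nat := find (fun k => y \in reach k x) (iota 0 #|T|).

Definition strongly_resolves (w u v : T) : bool :=
  (dist w u == dist w v + dist v u) || (dist w v == dist w u + dist u v).

Definition strong_resolving_set (S : {set T}) : bool :=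
  [forall u, forall v, (u != v) ==> [exists w in S, strongly_resolves w u v]].

Definition sdim : nat :=
  #|[arg min_(S < setT | strong_resolving_set S) #|S|]|.

Definition max_distant (u v : T) : bool :=
  [forall w, e u w ==> (dist v w <= dist u v)].

Definition mutually_max_distant (u v : T) : bool :=
  max_distant u v && max_distant v u.

End Graphs.

Definition strong_resolving_graph (T : finType) (e : rel T) : rel T :=
  fun u v => mutually_max_distant e u v.

Section Sets.
Variable T : finType.
Variable a : rel T.

Definition independent_set (S : {set T}) : bool :=
  [forall u in S, forall v in S, (u != v) ==> ~~ a u v].

Definition clique (S : {set T}) : bool :=
  [forall u in S, forall v in S, (u != v) ==> a u v].

Definition indep_number : nat :=
  #|[arg max_(S > set0 | independent_set S) #|S|]|.

Definition clique_partitionable (k : nat) : Prop :=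
  exists P : {set {set T}},
    [/\ partition P [set: T], #|P| = k & forall C, C \in P -> clique C].
End Sets.

Definition strong_product (T1 T2 : finType) (e1 : rel T1) (e2 : rel T2)
  : rel (T1 * T2) :=
  fun x y =>
    [|| (x.1 == y.1) && e2 x.2 y.2,
        e1 x.1 y.1 && (x.2 == y.2)
      | e1 x.1 y.1 && e2 x.2 y.2].

(* Main.v *)
Require Import Defs.
From mathcomp Require Import all_boot.
From mathcomp Require Import zify.
Set Implicit Arguments. Unset Strict Implicit. Unset Printing Implicit Defensive.

Section Dist.
Variables (T : finType) (e : rel T).
Hypothesis esym : symmetric e.
Hypothesis econn : connected_graph e.
Local Notation d := (dist e).

Lemma reachS k x y : (y \in reach e k.+1 x) =
  (y \in reach e k x) || [exists z in reach e k x, e z y].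
Proof. by rewrite /= in_setU inE. Qed.

Lemma reach_monoW k m x : k <= m -> reach e k x \subset reach e m x.
Proof.
elim: m => [|m IH]; first by rewrite leqn0 => /eqP ->.
rewrite leq_eqVlt => /orP[/eqP -> //|]; rewrite ltnS => /IH H.
apply: subset_trans H _; apply/subsetP => y yk; by rewrite reachS yk.
Qed.

Lemma path_reach x p : path e x p -> last x p \in reach e (size p) x.
Proof.
elim/last_ind: p => [|p z IH]; first by rewrite /= inE.
rewrite rcons_path last_rcons size_rcons => /andP[/IH H Hz].
rewrite reachS; apply/orP; right; apply/existsP; exists (last x p).
by rewrite H Hz.
Qed.

Lemma reach_small x y : exists k, (k < #|T|) && (y \in reach e k x).
Proof.
have /connectP[p pp ->] := econn x y.
case: (shortenP pp) => p' pp' up' _.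
exists (size p'); rewrite path_reach // andbT.
have := max_card (mem (x :: p')).
by move/card_uniqP: up' => ->.
Qed.

Lemma dist_reach x y k : (y \in reach e k x) = (d x y <= k).
Proof.
rewrite /dist; set P := fun k => y \in reach e k x.
have [k0 /andP[lt0 H0]] := reach_small x y.
have hasP : has P (iota 0 #|T|).
  by apply/hasP; exists k0; rewrite ?mem_iota.
have Hf := nth_find 0 hasP.
have Hlt : find P (iota 0 #|T|) < #|T|.
  by rewrite -{2}(size_iota 0 #|T|) -has_find.
rewrite nth_iota // add0n in Hf.
apply/idP/idP.
- move=> Hk; rewrite leqNgt; apply/negP => lt.
  have := before_find 0 lt; rewrite nth_iota ?add0n; last first.
    by apply: ltn_trans lt Hlt.
  by rewrite /P Hk.
- move=> le; exact: (subsetP (reach_monoW x le)) _ Hf.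
Qed.

Lemma dist_le0 x y : (d x y <= 0) = (x == y).
Proof. by rewrite -dist_reach /= inE eq_sym. Qed.

Lemma dist0 x : d x x = 0.
Proof. by apply/eqP; rewrite -leqn0 dist_le0. Qed.

Lemma distS k x y : (d x y <= k.+1) =
  (d x y <= k) || [exists z, (d x z <= k) && e z y].
Proof.
rewrite -!dist_reach reachS; congr (_ || _).
apply/existsP/existsP => -[z Hz]; exists z; by rewrite ?dist_reach in Hz *.
Qed.

Lemma dist_edge x y : e x y -> d x y <= 1.
Proof. move=> exy; rewrite distS; apply/orP; right; apply/existsP; exists x; by rewrite dist0. Qed.

Lemma dist_tri x y z : d x z <= d x y + d y z.
Proof.
suff H : forall b z, d y z <= b -> d x z <= d x y + b by apply: H.
elim=> [|b IH] {}z.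
  by rewrite dist_le0 => /eqP <-; rewrite addn0.
rewrite distS => /orP[/IH H|/existsP[w /andP[H1 H2]]].
  by rewrite addnS ltnW // ltnS.
rewrite addnS distS; apply/orP; right; apply/existsP; exists w.
by rewrite IH.
Qed.

Lemma dist_sym x y : d x y = d y x.
Proof.
suff H : forall k x y, d x y <= k -> d y x <= k.
  by apply/eqP; rewrite eqn_leq; apply/andP; split; apply: H.
elim=> [|k IH] {}x {}y.
  by rewrite !dist_le0 eq_sym.
rewrite distS => /orP[/IH H|/existsP[w /andP[H1 H2]]].
  by rewrite ltnW // ltnS.
apply: leq_trans (dist_tri y w x) _.
rewrite -add1n; apply: leq_add; [by rewrite dist_edge // esym | exact: IH].
Qed.

Lemma dist_pred x y k : d x y = k.+1 -> exists z, e z y /\ d x z = k.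
Proof.
move=> H; have := leqnn (d x y); rewrite {2}H distS => /orP[|/existsP[z /andP[H1 H2]]].
  by rewrite H ltnn.
exists z; split => //; apply/eqP; rewrite eqn_leq H1 /=.
have := dist_tri x z y; rewrite H => h.
have := dist_edge H2; lia.
Qed.

Lemma dist_nbr x y z : e x y -> d z y <= d z x + 1.
Proof. move=> exy; apply: leq_trans (dist_tri z x y) _; by rewrite leq_add2l dist_edge. Qed.

Lemma distS' k x y : (d x y <= k.+1) =
  [exists z, (d x z <= k) && ((z == y) || e z y)].
Proof.
rewrite distS; apply/orP/existsP.
- case=> [H|/existsP[z /andP[H1 H2]]]; first by exists y; rewrite H eqxx.
  by exists z; rewrite H1 H2 orbT.
- case=> z /andP[H1 /orP[/eqP <-|H2]]; first by left.
  by right; apply/existsP; exists z; rewrite H1 H2.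
Qed.

Lemma coord_bound x x' y M : (x == x') || e x x' ->
  (x == y) || max_distant e x y -> d x y <= M -> 0 < M -> d y x' <= M.
Proof.
case/orP => [/eqP <-|exx'] h hM M0; first by rewrite dist_sym.
case/orP: h => [/eqP <-|/forallP/(_ x')]; first exact: leq_trans (dist_edge exx') M0.
rewrite exx' /= => h; exact: leq_trans h hM.
Qed.

Ltac symall x y z u v :=
  have ? := dist_sym x y; have ? := dist_sym x z; have ? := dist_sym x u;
  have ? := dist_sym x v; have ? := dist_sym y z; have ? := dist_sym y u;
  have ? := dist_sym y v; have ? := dist_sym z u; have ? := dist_sym z v;
  have ? := dist_sym u v.

Definition cover_of (S : {set T}) := forall u v, u != v ->
  mutually_max_distant e u v -> (u \in S) || (v \in S).

Lemma srs_iff S : strong_resolving_set e S <-> cover_of S.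
Proof.
split.
- move=> /forallP H u v nuv /andP[mu mv].
  have := H u => /forallP/(_ v); rewrite nuv => /existsP[w /andP[wS res]].
  case/orP: res => /eqP h.
  + case: (eqVneq w v) => [<-|nwv]; first by rewrite wS orbT.
    exfalso; case Ek: (d w v) => [|k].
      by move: Ek => /eqP; rewrite -leqn0 dist_le0 (negbTE nwv).
    have [v' [ev'v dv']] := dist_pred Ek.
    have := (forallP mv) v'; rewrite esym ev'v /= => h2.
    have := dist_tri w v' u; rewrite (dist_sym u v') in h2.
    lia.
  + case: (eqVneq w u) => [<-|nwu]; first by rewrite wS.
    exfalso; case Ek: (d w u) => [|k].
      by move: Ek => /eqP; rewrite -leqn0 dist_le0 (negbTE nwu).
    have [u' [eu'u du']] := dist_pred Ek.
    have := (forallP mu) u'; rewrite esym eu'u /= => h2.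
    have := dist_tri w u' v; rewrite (dist_sym v u') in h2.
    lia.
- move=> cov; apply/forallP => u; apply/forallP => v; apply/implyP => nuv.
  pose Q (p : T * T) := d p.1 p.2 == d p.1 u + d u v + d v p.2.
  have Quv : Q (u, v) by rewrite /Q /= !dist0 addn0.
  case: (@arg_maxnP _ (u, v) Q (fun p => d p.1 p.2) Quv) => [[x y]] /eqP Qxy maxp.
  have mx : max_distant e x y.
    apply/forallP => z; apply/implyP => exz; rewrite leqNgt; apply/negP => gt.
    have t1 := dist_tri z u y; have t2 := dist_tri u v y.
    have t3 := dist_nbr y exz; have t4 := dist_nbr u exz.
    simpl in Qxy; symall x y z u v.
    have t5 : d z y = d z u + d u v + d v y by lia.
    have := maxp (z, y); rewrite /Q /= t5 eqxx => /(_ isT).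
    rewrite -t5 /=; lia.
  have my : max_distant e y x.
    apply/forallP => z; apply/implyP => eyz; rewrite leqNgt; apply/negP => gt.
    have t1 := dist_tri x v z; have t2 := dist_tri x u v.
    have t3 := dist_nbr x eyz; have t4 := dist_nbr v eyz.
    simpl in Qxy; symall x y z u v.
    have t5 : d x z = d x u + d u v + d v z by lia.
    have := maxp (x, z); rewrite /Q /= t5 eqxx => /(_ isT).
    rewrite -t5 /=; lia.
  have nxy : x != y.
    apply/negP => /eqP exy; move: Qxy; rewrite exy dist0 /= => h.
    have : d u v = 0 by lia.
    by move/eqP; rewrite -leqn0 dist_le0 (negbTE nuv).
  case/orP: (cov x y nxy (introT andP (conj mx my))) => [xS|yS].
  + apply/existsP; exists x; rewrite xS /strongly_resolves; apply/orP; right.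
    have := dist_tri x u v; have := dist_tri x v y; simpl in Qxy; lia.
  + apply/existsP; exists y; rewrite yS /strongly_resolves; apply/orP; left.
    have := dist_tri y v u; have := dist_tri y u x; simpl in Qxy.
    symall x y u v u; move=> *; apply/eqP; lia.
Qed.

End Dist.

Lemma indep_compl (T : finType) (a : rel T) (S : {set T}) :
  independent_set a (~: S) <-> forall u v, u != v -> a u v -> (u \in S) || (v \in S).
Proof.
split.
- move=> /forall_inP H u v nuv auv; apply/negPn/negP; rewrite negb_or => /andP[nu nv].
  have := H u; rewrite inE nu => /(_ isT)/forall_inP/(_ v); rewrite inE nv => /(_ isT).
  by rewrite nuv auv.
- move=> H; apply/forall_inP => u; rewrite inE => nu; apply/forall_inP => v.
  rewrite inE => nv; apply/implyP => nuv; apply/negP => auv.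
  by have := H u v nuv auv; rewrite (negbTE nu) (negbTE nv).
Qed.

Lemma indep_le (T : finType) (a : rel T) I : independent_set a I -> #|I| <= indep_number a.
Proof.
rewrite /indep_number; case: arg_maxnP => [|J _ maxJ]; last exact: maxJ.
by apply/forall_inP => u; rewrite inE.
Qed.

Lemma indep_witness (T : finType) (a : rel T) :
  exists I, independent_set a I /\ #|I| = indep_number a.
Proof.
rewrite /indep_number; case: arg_maxnP => [|J HJ _]; last by exists J.
by apply/forall_inP => u; rewrite inE.
Qed.

Lemma sdim_eq (T : finType) (e : rel T) : symmetric e -> connected_graph e ->
  sdim e = #|T| - indep_number (strong_resolving_graph e).
Proof.
move=> es ec.
have cov_ind S : strong_resolving_set e S <-> independent_set (strong_resolving_graph e) (~: S).
  by rewrite (srs_iff es ec) indep_compl.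
rewrite /sdim; case: arg_minnP => [|S srsS minS].
  by apply/(srs_iff es ec) => u v _ _; rewrite inE.
have [I [indI HI]] := indep_witness (strong_resolving_graph e).
have h1 : #|~: S| <= #|I|.
  by rewrite HI; apply: indep_le; apply/cov_ind.
have h2 : #|S| <= #|~: I|.
  apply: minS; apply/cov_ind; by rewrite setCK.
rewrite -HI; have := cardsC S; have := cardsC I; lia.
Qed.

Lemma indep_use (T : finType) (r : rel T) S x y :
  independent_set r S -> x \in S -> y \in S -> x != y -> ~~ r x y.
Proof. by move=> /forall_inP H xS yS nxy; have := (forall_inP (H x xS)) y yS; move/implyP; apply. Qed.

Lemma clique_use (T : finType) (r : rel T) C x y :
  clique r C -> x \in C -> y \in C -> (x == y) || r x y.
Proof.
move=> /forall_inP H xC yC; case: eqVneq => //= nxy.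
by have := (forall_inP (H x xC)) y yC; move/implyP; apply.
Qed.

Lemma card_bigcup_le (T I : finType) (J : {set I}) (A : I -> {set T}) :
  #|\bigcup_(i in J) A i| <= \sum_(i in J) #|A i|.
Proof.
elim/big_rec2: _ => [|i u s _ IH]; first by rewrite cards0.
apply: leq_trans (fst (leq_card_setU _ _)) _; by rewrite leq_add2l.
Qed.

Lemma connect_hom (A B : finType) (ea : rel A) (eb : rel B) (f : A -> B) :
  (forall x y, ea x y -> eb (f x) (f y)) ->
  forall x y, connect ea x y -> connect eb (f x) (f y).
Proof.
move=> H x y /connectP[p]; elim: p x => [|z p IH] x /=.
  by move=> _ ->; exact: connect0.
move=> /andP[exz pz] ly; exact: connect_trans (connect1 (H _ _ exz)) (IH _ pz ly).
Qed.

Section Prod.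
Variables (T1 T2 : finType) (e1 : rel T1) (e2 : rel T2).
Hypotheses (s1 : symmetric e1) (s2 : symmetric e2)
  (c1 : connected_graph e1) (c2 : connected_graph e2).
Local Notation P := (strong_product e1 e2).
Local Notation d1 := (dist e1).
Local Notation d2 := (dist e2).
Local Notation dP := (dist P).

Lemma P_sym : symmetric P.
Proof.
move=> [a b] [c d]; rewrite /strong_product /= (s1 a c) (s2 b d).
by rewrite (eq_sym a c) (eq_sym b d).
Qed.

Lemma P_conn : connected_graph P.
Proof.
move=> [a b] [c d]; apply: (@connect_trans _ _ (c, b)).
- apply: (connect_hom (f := fun x => (x, b))) (c1 a c) => x y exy.
  by rewrite /strong_product /= exy eqxx /= orbT.
- apply: (connect_hom (f := fun y => (c, y))) (c2 b d) => x y exy.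
  by rewrite /strong_product /= exy eqxx.
Qed.

Lemma P_step a b c d : ((a, b) == (c, d)) || P (a, b) (c, d) =
  ((a == c) || e1 a c) && ((b == d) || e2 b d).
Proof.
rewrite /strong_product /= xpair_eqE.
by case: (a == c); case: (b == d); case: (e1 a c); case: (e2 b d).
Qed.

Lemma distP_le k a b c d :
  (dP (a, b) (c, d) <= k) = (d1 a c <= k) && (d2 b d <= k).
Proof.
elim: k c d => [|k IH] c d.
  by rewrite !(dist_le0 P_conn) (dist_le0 c1) (dist_le0 c2) xpair_eqE.
rewrite !(distS' P_conn) (distS' c1) (distS' c2).
apply/existsP/andP.
- move=> [[z1 z2]]; rewrite IH P_step => /andP[/andP[h1 h2] /andP[g1 g2]].
  by split; apply/existsP; [exists z1 | exists z2]; rewrite ?h1 ?h2 ?g1 ?g2.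
- move=> [/existsP[z1 /andP[h1 g1]] /existsP[z2 /andP[h2 g2]]].
  by exists (z1, z2); rewrite IH P_step h1 h2 g1 g2.
Qed.

Lemma distP_max a b c d : dP (a, b) (c, d) = maxn (d1 a c) (d2 b d).
Proof.
have := distP_le (dP (a, b) (c, d)) a b c d; rewrite leqnn => /esym/andP[h1 h2].
have := distP_le (maxn (d1 a c) (d2 b d)) a b c d; rewrite leq_maxl leq_maxr => h.
by apply/eqP; rewrite eqn_leq h geq_max h1 h2.
Qed.

Lemma mmdP_SR1 a b c d : mutually_max_distant P (a, b) (c, d) ->
  d2 b d <= d1 a c -> mutually_max_distant e1 a c.
Proof.
move=> /andP[m1 m2] h; apply/andP; split; apply/forallP => w; apply/implyP => ew.
- have E : P (a, b) (w, b) by rewrite /strong_product /= ew eqxx /= orbT.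
  have := implyP ((forallP m1) (w, b)) E; rewrite !distP_max; lia.
- have E : P (c, d) (w, d) by rewrite /strong_product /= ew eqxx /= orbT.
  have := implyP ((forallP m2) (w, d)) E; rewrite !distP_max.
  rewrite (dist_sym s1 c1 c a) (dist_sym s2 c2 d b); lia.
Qed.

Lemma mmdP_SR2 a b c d : mutually_max_distant P (a, b) (c, d) ->
  d1 a c <= d2 b d -> mutually_max_distant e2 b d.
Proof.
move=> /andP[m1 m2] h; apply/andP; split; apply/forallP => w; apply/implyP => ew.
- have E : P (a, b) (a, w) by rewrite /strong_product /= ew eqxx.
  have := implyP ((forallP m1) (a, w)) E; rewrite !distP_max; lia.
- have E : P (c, d) (c, w) by rewrite /strong_product /= ew eqxx.
  have := implyP ((forallP m2) (c, w)) E; rewrite !distP_max.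
  rewrite (dist_sym s1 c1 c a) (dist_sym s2 c2 d b); lia.
Qed.

Lemma mmdP_of a b c d : (a, b) != (c, d) ->
  (a == c) || mutually_max_distant e1 a c ->
  (b == d) || mutually_max_distant e2 b d ->
  mutually_max_distant P (a, b) (c, d).
Proof.
move=> neq h1 h2.
have M0 : 0 < maxn (d1 a c) (d2 b d).
  rewrite lt0n; apply: contra neq; rewrite -leqn0 geq_max (dist_le0 c1) (dist_le0 c2).
  by move=> /andP[/eqP -> /eqP ->].
have h1a : (a == c) || max_distant e1 a c.
  by case/orP: h1 => [->|/andP[m _]]; rewrite ?m ?orbT.
have h1b : (c == a) || max_distant e1 c a.
  by case/orP: h1 => [/eqP ->|/andP[_ m]]; rewrite ?eqxx ?m ?orbT.
have h2a : (b == d) || max_distant e2 b d.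
  by case/orP: h2 => [->|/andP[m _]]; rewrite ?m ?orbT.
have h2b : (d == b) || max_distant e2 d b.
  by case/orP: h2 => [/eqP ->|/andP[_ m]]; rewrite ?eqxx ?m ?orbT.
apply/andP; split; apply/forallP => -[a' b']; apply/implyP => E.
- have := P_step a b a' b'; rewrite E orbT => /esym/andP[g1 g2].
  rewrite !distP_max geq_max; apply/andP; split.
  + by apply: (coord_bound s1 c1 g1 h1a) => //; rewrite leq_maxl.
  + by apply: (coord_bound s2 c2 g2 h2a) => //; rewrite leq_maxr.
- have := P_step c d a' b'; rewrite E orbT => /esym/andP[g1 g2].
  rewrite !distP_max (dist_sym s1 c1 c a) (dist_sym s2 c2 d b) geq_max.
  apply/andP; split.
  + by apply: (coord_bound s1 c1 g1 h1b) => //; rewrite (dist_sym s1 c1) leq_maxl.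
  + by apply: (coord_bound s2 c2 g2 h2b) => //; rewrite (dist_sym s2 c2) leq_maxr.
Qed.

Local Notation SR1 := (strong_resolving_graph e1).
Local Notation SR2 := (strong_resolving_graph e2).
Local Notation SRP := (strong_resolving_graph P).

Lemma beta_ge : indep_number SR1 * indep_number SR2 <= indep_number SRP.
Proof.
have [I1 [i1 <-]] := indep_witness SR1; have [I2 [i2 <-]] := indep_witness SR2.
rewrite -cardsX; apply: indep_le.
apply/forall_inP => -[a b] /setXP[aI bI]; apply/forall_inP => -[c d] /setXP[cI dI].
apply/implyP => neq; apply/negP => mm.
case: (leqP (d2 b d) (d1 a c)) => h.
- have s := mmdP_SR1 mm h; case: (eqVneq a c) => [eac|nac].
  + subst c; move: h; rewrite (dist0 c1) leqn0 -leqn0 (dist_le0 c2) => /eqP bd.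
    by subst d; rewrite eqxx in neq.
  + by have := indep_use i1 aI cI nac; move/negP; apply.
- have s := mmdP_SR2 mm (ltnW h).
  have nbd : b != d by apply/eqP => bd; subst d; rewrite (dist0 c2) in h.
  by have := indep_use i2 bI dI nbd; move/negP; apply.
Qed.

Lemma beta_le (Pt : {set {set T1}}) : partition Pt [set: T1] ->
  #|Pt| = indep_number SR1 -> (forall C, C \in Pt -> clique SR1 C) ->
  indep_number SRP <= indep_number SR1 * indep_number SR2.
Proof.
move=> hp hcard hcl.
have [S [iS <-]] := indep_witness SRP.
have sub : S \subset \bigcup_(C in Pt) (S :&: setX C setT).
  apply/subsetP => -[a b] xS.
  have : a \in cover Pt by rewrite (cover_partition hp) inE.
  move=> /bigcupP[C CP aC]; apply/bigcupP; exists C => //.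
  by rewrite in_setI xS in_setX aC in_setT.
apply: leq_trans (subset_leq_card sub) _.
apply: leq_trans (card_bigcup_le _ _) _.
rewrite -hcard -sum_nat_const; apply: leq_sum => C CP.
have inj : {in S :&: setX C setT &, injective snd}.
  move=> [a b] [c d]; rewrite !in_setI !in_setX !in_setT !andbT.
  move=> /andP[aS aC] /andP[cS cC] /= bd; subst d.
  apply/eqP; apply/negPn/negP => neq.
  have := indep_use iS aS cS neq; move/negP; apply.
  apply: mmdP_of => //; last by rewrite eqxx.
  exact: clique_use (hcl C CP) aC cC.
rewrite -(card_in_imset inj); apply: indep_le.
apply/forall_inP => b /imsetP[[a b0] Ha ->]; apply/forall_inP => d /imsetP[[c d0] Hc ->] /=.
apply/implyP => nbd; apply/negP => sr.
move: Ha Hc; rewrite !in_setI !in_setX !in_setT !andbT => /andP[aS aC] /andP[cS cC].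
have neq : (a, b0) != (c, d0) by rewrite xpair_eqE negb_and nbd orbT.
have := indep_use iS aS cS neq; move/negP; apply.
apply: mmdP_of => //; last by apply/orP; right.
exact: clique_use (hcl C CP) aC cC.
Qed.

End Prod.

Lemma indep_le_card (T : finType) (a : rel T) : indep_number a <= #|T|.
Proof. have [I [_ <-]] := indep_witness a; exact: max_card. Qed.

Theorem theorem15 (T1 T2 : finType) (e1 : rel T1) (e2 : rel T2) :
  simple_graph e1 -> simple_graph e2 ->
  connected_graph e1 -> connected_graph e2 ->
  1 < #|T1| -> 1 < #|T2| ->
  clique_partitionable (strong_resolving_graph e1)
    (indep_number (strong_resolving_graph e1)) ->
  sdim (strong_product e1 e2) =
    #|T2| * sdim e1 + #|T1| * sdim e2 - sdim e1 * sdim e2.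
Proof.
move=> [s1 _] [s2 _] c1 c2 _ _ [Pt [hp hcard hcl]].
rewrite (sdim_eq (P_sym s1 s2) (P_conn c1 c2)) (sdim_eq s1 c1) (sdim_eq s2 c2).
have E : indep_number (strong_resolving_graph (strong_product e1 e2)) =
  indep_number (strong_resolving_graph e1) * indep_number (strong_resolving_graph e2).
  apply/eqP; rewrite eqn_leq (beta_ge s1 s2 c1 c2) (beta_le s1 s2 c1 c2 hp hcard hcl).
  done.
rewrite E card_prod.
have b1 := indep_le_card (strong_resolving_graph e1).
have b2 := indep_le_card (strong_resolving_graph e2).
move: b1 b2.
set x1 := indep_number _; set x2 := indep_number _; set n1 := #|T1|; set n2 := #|T2|.
move=> b1 b2.
have [s ->] : exists s, n1 = s + x1 by exists (n1 - x1); rewrite subnK.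
have [t ->] : exists t, n2 = t + x2 by exists (n2 - x2); rewrite subnK.
rewrite !addnK !mulnDl !mulnDr.
nia.
Qed.
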